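(* Let $X$ be a convex metric space over a Boolean ring $B$, $0\in X$, $R=\{x_{1},\ldots,x_{n}\}$ a referential of $(X,0)$, and $x\in X$. There is a unique tuple $(a_{1},\ldots,a_{n})\in B^{n}$ such that: (1) $a_{i}a_{j}=0$ whenever $i\neq j$; (2) $x=\sum_{i=1}^{n}a_{i}x_{i}$ (orthogonal combination); (3) $a_{i}\le |x_{i}|$ for $i=1,\ldots,n$.
   Context: $B$ is a Boolean ring ($a\vee b=a+b+ab$, $a\le b\iff ab=a$; $a_1\oplus\cdots\oplus a_n$ denotes a sum of pairwise disjoint elements). A Boolean metric space over $B$: set $X$ with $d:X\times X\to B$, $d(x,y)=0\iff x=y$, symmetric, $d(x,z)\le d(x,y)\vee d(y,z)$. For $y_1,\dots,y_m\in X$, $b_i\in B$ with $b_1\oplus\cdots\oplus b_m=1$, $y$ is a convex combination of the $y_i$ with coefficients $b_i$ if $b_id(y,y_i)=0$ for all $i$ (unique when it exists); $X$ is convex if all such combinations exist. In $(X,0)$: $|x|=d(0,x)$. For pairwise disjoint $a_1,\dots,a_n\in B$, the orthogonal combination $\sum_{i=1}^n a_ix_i$ denotes the convex combination of $0,x_1,\dots,x_n$ with coefficients $a_0,a_1,\dots,a_n$ where $a_0=1+a_1+\cdots+a_n$. $x\perp y$ iff $d(x,y)=|x|\vee|y|$; a finite $R\subseteq X$ is orthogonal if $0\notin R$ and distinct elements are orthogonal; a referential of $(X,0)$ is an orthogonal $R$ such that every element of $X$ is a convex combination of elements of $R\cup\{0\}$. *)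

(* Defs.v *)
From HB Require Import structures.
From mathcomp Require Import all_boot all_order all_algebra.
Set Implicit Arguments. Unset Strict Implicit. Unset Printing Implicit Defensive.
Import GRing.Theory.
Local Open Scope ring_scope.

(* A Boolean ring: a (unital, possibly trivial) ring in which every element is
   idempotent. (Commutativity and characteristic 2 follow.) *)
Definition boolean_ring (B : pzRingType) : Prop := forall a : B, a * a = a.

Definition bjoin (B : pzRingType) (a b : B) : B := a + b + a * b.
Definition ble (B : pzRingType) (a b : B) : Prop := a * b = a.

Definition boolean_metric (B : pzRingType) (X : Type) (d : X -> X -> B) : Prop :=
  (forall x y, d x y = 0 <-> x = y) /\
  (forall x y, d x y = d y x) /\
  (forall x y z, ble (d x z) (bjoin (d x y) (d y z))).

Definition disjoint_family (B : pzRingType) (m : nat) (b : 'I_m -> B) : Prop :=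
  forall i j : 'I_m, i != j -> b i * b j = 0.

Definition partition_of_unity (B : pzRingType) (m : nat) (b : 'I_m -> B) : Prop :=
  disjoint_family b /\ \sum_(i < m) b i = 1.

Definition is_convex_comb (B : pzRingType) (X : Type) (d : X -> X -> B)
  (m : nat) (y : X) (ys : 'I_m -> X) (bs : 'I_m -> B) : Prop :=
  partition_of_unity bs /\ forall i : 'I_m, bs i * d y (ys i) = 0.

Definition convex_space (B : pzRingType) (X : Type) (d : X -> X -> B) : Prop :=
  forall (m : nat) (ys : 'I_m -> X) (bs : 'I_m -> B),
    partition_of_unity bs -> exists y : X, is_convex_comb d y ys bs.

Definition cons_fam (T : Type) (n : nat) (z0 : T) (f : 'I_n -> T) : 'I_n.+1 -> T :=
  fun i => match unlift ord0 i with None => z0 | Some j => f j end.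

Definition bnorm (B : pzRingType) (X : Type) (d : X -> X -> B) (o x : X) : B := d o x.

(* x = sum_i a_i x_i (orthogonal combination in (X,o)): the convex combination of
   o, x_1, ..., x_n with coefficients a_0, a_1, ..., a_n, a_0 = 1 + a_1 + ... + a_n;
   the a_i are required pairwise disjoint. *)
Definition is_orth_comb (B : pzRingType) (X : Type) (d : X -> X -> B) (o : X)
  (n : nat) (x : X) (xs : 'I_n -> X) (a : 'I_n -> B) : Prop :=
  disjoint_family a /\
  is_convex_comb d x (cons_fam o xs) (cons_fam (1 + \sum_(i < n) a i) a).

Definition orthogonal (B : pzRingType) (X : Type) (d : X -> X -> B) (o x y : X) : Prop :=
  d x y = bjoin (bnorm d o x) (bnorm d o y).

Definition orthogonal_set (B : pzRingType) (X : Type) (d : X -> X -> B) (o : X)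
  (n : nat) (xs : 'I_n -> X) : Prop :=
  (forall i, xs i <> o) /\ (forall i j, i != j -> orthogonal d o (xs i) (xs j)).

Definition referential (B : pzRingType) (X : Type) (d : X -> X -> B) (o : X)
  (n : nat) (xs : 'I_n -> X) : Prop :=
  injective xs /\ orthogonal_set d o xs /\
  forall x : X, exists (m : nat) (ys : 'I_m -> X) (bs : 'I_m -> B),
    (forall k, ys k = o \/ exists i, ys k = xs i) /\ is_convex_comb d x ys bs.

(* Main.v *)
Require Import Defs.
From mathcomp Require Import all_boot all_order all_algebra.
From Stdlib Require Import ClassicalEpsilon FunctionalExtensionality.
Set Implicit Arguments. Unset Strict Implicit. Unset Printing Implicit Defensive.
Import GRing.Theory.
Local Open Scope ring_scope.

Lemma addxx (B : pzRingType) (hB : boolean_ring B) (a : B) : a + a = 0.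
Proof.
have h := hB (a + a). rewrite mulrDl !mulrDr hB in h.
by apply: (addrI (a + a)); rewrite addr0.
Qed.

Lemma oppb (B : pzRingType) (hB : boolean_ring B) (a : B) : - a = a.
Proof. by apply/eqP; rewrite eq_sym -addr_eq0 addxx. Qed.

Lemma mulC (B : pzRingType) (hB : boolean_ring B) (a b : B) : a * b = b * a.
Proof.
have h := hB (a + b). rewrite mulrDl !mulrDr !hB in h.
have h2 : a * b + b * a = 0.
  apply: (addrI (a + b)); rewrite addr0 -[RHS]h.
  by rewrite -!addrA [b + _]addrC -!addrA.
by move/eqP: h2; rewrite addr_eq0 oppb // => /eqP.
Qed.

Lemma mulCA (B : pzRingType) (hB : boolean_ring B) (a b c : B) : a * (b * c) = b * (a * c).
Proof. by rewrite !mulrA (mulC hB a b). Qed.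

Lemma mulAC (B : pzRingType) (hB : boolean_ring B) (a b c : B) : a * b * c = a * c * b.
Proof. by rewrite -!mulrA (mulC hB b c). Qed.

Lemma tri_zero (B : pzRingType) (X : Type) (d : X -> X -> B) (hB : boolean_ring B)
  (hd : boolean_metric d) (e : B) (x y z : X) :
  e * d x y = 0 -> e * d y z = 0 -> e * d x z = 0.
Proof.
case: hd => _ [_ ht] h1 h2.
have t := ht x y z; rewrite /ble /bjoin in t.
rewrite -t !mulrDr !mulrA (mulAC hB e (d x z)) h1 mul0r.
by rewrite (mulAC hB e (d x z) (d y z)) h2 !mul0r add0r addr0.
Qed.

Lemma tri_one (B : pzRingType) (X : Type) (d : X -> X -> B) (hB : boolean_ring B)
  (hd : boolean_metric d) (e : B) (x y z : X) :
  e * d x y = 0 -> e * d x z = e * d x z * d y z.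
Proof.
case: hd => _ [_ ht] h1.
have t := ht x y z; rewrite /ble /bjoin in t.
by rewrite -{1}t !mulrDr !mulrA (mulAC hB e (d x z)) h1 !mul0r add0r addr0.
Qed.

Lemma ble_join (B : pzRingType) (hB : boolean_ring B) (e p q : B) :
  ble e p -> e * bjoin p q = e.
Proof.
rewrite /ble /bjoin => h. by rewrite !mulrDr h mulrA h -addrA addxx // addr0.
Qed.

Lemma cons0 T n (z : T) (f : 'I_n -> T) : cons_fam z f ord0 = z.
Proof. by rewrite /cons_fam unlift_none. Qed.

Lemma consS T n (z : T) (f : 'I_n -> T) j : cons_fam z f (lift ord0 j) = f j.
Proof. by rewrite /cons_fam liftK. Qed.

Lemma sum_sel (B : pzRingType) (hB : boolean_ring B) m (f : 'I_m -> B)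
  (hf : disjoint_family f) (P : pred 'I_m) k :
  f k * \sum_(k' < m | P k') f k' = if P k then f k else 0.
Proof.
rewrite mulr_sumr; case: (boolP (P k)) => Pk.
  rewrite (bigD1 k) //= hB big1 ?addr0 // => k' /andP[_ hk']; apply: hf; by rewrite eq_sym.
apply: big1 => k' Pk'; apply: hf; apply/eqP => e; subst k'; by rewrite Pk' in Pk.
Qed.

Definition dec (P : Prop) : bool := if excluded_middle_informative P then true else false.
Lemma decP (P : Prop) : dec P <-> P.
Proof. by rewrite /dec; case: excluded_middle_informative. Qed.

Lemma orth_parts (B : pzRingType) (X : Type) (d : X -> X -> B) (o : X)
  (n : nat) (xs : 'I_n -> X) (x : X) (a : 'I_n -> B) :
  is_orth_comb d o x xs a ->
  (1 + \sum_(i < n) a i) * d x o = 0 /\ forall i, a i * d x (xs i) = 0.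
Proof.
case=> _ [_ h]; split; first by have := h ord0; rewrite !cons0.
by move=> i; have := h (lift ord0 i); rewrite !consS.
Qed.

Lemma uniq_part (B : pzRingType) (X : Type) (d : X -> X -> B) (o : X)
  (n : nat) (xs : 'I_n -> X) (x : X) (hB : boolean_ring B) (hd : boolean_metric d)
  (xorth : forall i j, i != j -> Defs.orthogonal d o (xs i) (xs j))
  (a a' : 'I_n -> B) :
  (1 + \sum_(i < n) a i) * d x o = 0 -> (forall i, a i * d x (xs i) = 0) ->
  (forall i, ble (a i) (bnorm d o (xs i))) ->
  (1 + \sum_(i < n) a' i) * d x o = 0 -> (forall i, a' i * d x (xs i) = 0) ->
  forall i, a i = a i * a' i.
Proof.
move=> Ha0 Ha Hb Ha'0 Ha' i.
have hsym : forall u v, d u v = d v u by case: hd => _ [].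
have key : forall j, j != i -> a i * a' j = 0.
  move=> j ji. have hdij : Defs.orthogonal d o (xs i) (xs j) by apply: xorth; rewrite eq_sym.
  have e0 : a i * a' j * d (xs i) (xs j) = 0.
    apply: (tri_zero hB hd (y:=x)).
      by rewrite hsym -mulrA mulCA // Ha mulr0.
    by rewrite -mulrA Ha' mulr0.
  by rewrite hdij /bnorm (mulAC hB) ble_join in e0.
have k0 : a i * (1 + \sum_(j < n) a' j) = 0.
  have e0 : a i * (1 + \sum_(j < n) a' j) * d o (xs i) = 0.
    apply: (tri_zero hB hd (y:=x)).
      by rewrite hsym -mulrA Ha'0 mulr0.
    by rewrite -mulrA mulCA // Ha mulr0.
  by rewrite (mulAC hB) Hb in e0.
have E : a i = a i * ((1 + \sum_(j < n) a' j) + \sum_(j < n) a' j).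
  by rewrite -addrA addxx // addr0 mulr1.
rewrite {1}E mulrDr k0 add0r mulr_sumr (bigD1 i) //= big1 ?addr0 //.

Qed.

Theorem mainTheorem11 (B : pzRingType) (X : Type) (d : X -> X -> B) (o : X)
  (n : nat) (xs : 'I_n -> X) (x : X) :
  boolean_ring B -> boolean_metric d -> convex_space d ->
  referential d o xs ->
  exists! a : 'I_n -> B,
    disjoint_family a /\ is_orth_comb d o x xs a /\
    (forall i : 'I_n, ble (a i) (bnorm d o (xs i))).
Proof.
move=> hB hd hconv [xinj [[xno xorth] xref]].
have hsym : forall u v, d u v = d v u by case: hd => _ [].
have [m [ys [bs [hys [[hbdis hbsum] hbd]]]]] := xref x.
pose p k i := dec (ys k = xs i).
pose c i := \sum_(k < m | p k i) bs k.
pose a i := c i * d o (xs i).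
have pP : forall k j, ys k = xs j -> forall i, p k i = (i == j).
  move=> k j e i; apply/idP/eqP => [/decP|->]; last by apply/decP.
  by rewrite e => /xinj ->.
have bc : forall k i, bs k * c i = if p k i then bs k else 0.
  by move=> k i; exact: (sum_sel hB hbdis (fun k' => p k' i) k).
have cd : forall i, c i * d x (xs i) = 0.
  move=> i; rewrite mulr_suml big1 // => k /decP e; rewrite -e; exact: hbd k.
have cc : forall i j, i != j -> c i * c j = 0.
  move=> i j ij; rewrite mulr_suml big1 // => k pki; rewrite bc.
  case: ifP => // pkj; move/decP: pki => ei; move: pkj; rewrite (pP k i ei) => /eqP ji.
  by rewrite ji eqxx in ij.
have adis : disjoint_family a.
  by move=> i j ij; rewrite /a mulrA (mulAC hB (c i)) cc // !mul0r.
have ab : forall i, ble (a i) (bnorm d o (xs i)).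
  by move=> i; rewrite /ble /a /bnorm -mulrA hB.
have asel : forall k j, ys k = xs j -> bs k * \sum_(i < n) a i = bs k * d o (xs j).
  move=> k j e; rewrite mulr_sumr (bigD1 j) //= big1 ?addr0.
    by rewrite /a mulrA bc (pP k j e) eqxx.
  by move=> i ij; rewrite /a mulrA bc (pP k j e) (negbTE ij) mul0r.
have a0 : (1 + \sum_(i < n) a i) * d x o = 0.
  rewrite -[LHS]mul1r -{1}hbsum mulr_suml big1 // => k _.
  case: (hys k) => [e|[j e]].
    rewrite mulCA //; have := hbd k; rewrite e => ->; by rewrite mulr0.
  rewrite mulrA mulrDr mulr1 (asel k j e) mulrDl.
  idtac.
  have hk : bs k * d x (xs j) = 0 by have := hbd k; rewrite e.
  have t := @tri_one _ _ d hB hd (bs k) x (xs j) o hk.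
  by rewrite (mulAC hB (bs k)) (hsym o) -t addxx.
have ai : forall i, a i * d x (xs i) = 0.
  by move=> i; rewrite /a (mulAC hB) cd mul0r.
have asum : forall i, a i * \sum_(j < n) a j = a i.
  by move=> i; exact: (sum_sel hB adis xpredT i).
exists a; split.
  split; first done. split; last done.
  split; first done.
  split.
    split.
      move=> i j; case: (unliftP ord0 i) => [i' ->|->]; case: (unliftP ord0 j) => [j' ->|->];
        rewrite ?cons0 ?consS.
      - move=> h; apply: adis; apply: contraNneq h => ->; done.
      - by move=> _; rewrite mulrDr mulr1 asum addxx.
      - by move=> _; rewrite mulrDl mul1r (mulC hB _ (a j')) asum addxx.
      - by rewrite eqxx.
    rewrite big_ord_recl cons0 [X in _ + X = _](eq_bigr (fun i => a i)); last by move=> i _; exact: consS.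
    by rewrite -addrA addxx // addr0.
  move=> i; case: (unliftP ord0 i) => [i' ->|->]; rewrite ?cons0 ?consS //.
move=> a' [_ [Ha' Hb']].
have [H0 Hi] := orth_parts Ha'.
apply: functional_extensionality => i.
rewrite (uniq_part hB hd xorth a0 ai ab H0 Hi i).
by rewrite [RHS](uniq_part hB hd xorth H0 Hi Hb' a0 ai i) (mulC hB).
Qed.
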